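(* Let $A$ be a commutative ring, $B=A[z_1,\ldots,z_n]$, and $a_1,\ldots,a_n\in A$ a regular sequence in $A$. Let $\mathcal D:B^n\to B$ be the $A$-linear map $\mathcal D(h_1,\ldots,h_n)=\sum_{i=1}^n(\partial_{z_i}h_i-a_ih_i)$, and let $\mathfrak a=Aa_1+\cdots+Aa_n$. Let $g\in B$ have total degree $d$ and let $g_d$ be its homogeneous component of degree $d$. If $g\in\mathrm{Im}\,\mathcal D$, then every coefficient of $g_d$ lies in $\mathfrak a$.
   Context: $\partial_{z_i}$ denotes the formal partial derivative with respect to $z_i$ on $B$. *)

(* Defs.v *)
From HB Require Import structures.
From mathcomp Require Import all_boot all_order all_algebra.
Set Implicit Arguments. Unset Strict Implicit. Unset Printing Implicit Defensive.
Import GRing.Theory.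
Local Open Scope ring_scope.

Definition mon (n : nat) := n.-tuple nat.

Definition mdeg (n : nat) (m : mon n) : nat := (\sum_(j < n) tnth m j)%N.

Definition incr (n : nat) (m : mon n) (i : 'I_n) : mon n :=
  [tuple (tnth m j + (j == i))%N | j < n].

(* a polynomial of B = A[z_1..z_n] is given by its coefficient function,
   which must be finitely supported *)
Definition fin_supp (A : comNzRingType) (n : nat) (p : mon n -> A) : Prop :=
  exists s : seq (mon n), forall m, p m != 0 -> m \in s.

(* formal partial derivative d/dz_i, coefficientwise:
   coefficient of z^m in d_i h is (m_i + 1) * (coefficient of z^(m+e_i) in h) *)
Definition pderiv (A : comNzRingType) (n : nat) (i : 'I_n) (h : mon n -> A)
  : mon n -> A := fun m => h (incr m i) *+ (tnth m i).+1.

Definition Dop (A : comNzRingType) (n : nat) (a : 'I_n -> A)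
  (h : 'I_n -> mon n -> A) : mon n -> A :=
  fun m => \sum_(i < n) (pderiv i (h i) m - a i * h i m).

(* membership in the ideal A a_1 + ... + A a_k (first k elements) *)
Definition in_ideal (A : comNzRingType) (n : nat) (a : 'I_n -> A) (k : nat)
  (x : A) : Prop :=
  exists c : 'I_n -> A, x = \sum_(i < n | (i < k)%N) c i * a i.

Definition regular_seq (A : comNzRingType) (n : nat) (a : 'I_n -> A) : Prop :=
  (forall (i : 'I_n) (x : A), in_ideal a i (x * a i) -> in_ideal a i x)
  /\ ~ in_ideal a n 1.

(* Main.v *)
Require Import Defs.
From HB Require Import structures.
From mathcomp Require Import all_boot all_order all_algebra.
Set Implicit Arguments. Unset Strict Implicit. Unset Printing Implicit Defensive.
Import GRing.Theory.
Local Open Scope ring_scope.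
From Stdlib Require Import IndefiniteDescription.

Lemma tnth_incr n (m : mon n) i j : tnth (incr m i) j = (tnth m j + (j == i))%N.
Proof. by rewrite /incr tnth_mktuple. Qed.

Lemma mdeg_incr n (m : mon n) i : mdeg (incr m i) = (mdeg m).+1.
Proof.
rewrite /mdeg (eq_bigr _ (fun j _ => tnth_incr m i j)) big_split /=.
have -> : (\sum_(j < n) (j == i) = 1)%N by rewrite (bigD1 i) //= eqxx big1 // => j /negbTE ->.
by rewrite addn1.
Qed.

Lemma incrC n (m : mon n) i j : incr (incr m i) j = incr (incr m j) i.
Proof. by apply: eq_from_tnth => k; rewrite !tnth_incr addnAC. Qed.

Lemma sum_split_k (A : comNzRingType) n k (hk : (k < n)%N) (F : 'I_n -> A) :
  \sum_(i < n | (i < k.+1)%N) F i = \sum_(i < n | (i < k)%N) F i + F (Ordinal hk).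
Proof.
rewrite (bigD1 (Ordinal hk)) //= addrC; congr (_ + _).
apply: eq_bigl => i; rewrite ltnS leq_eqVlt -val_eqE /=.
by case: ltngtP.
Qed.
Lemma antisym_sum (A : comNzRingType) n (F : 'I_n -> 'I_n -> A) :
  (forall i j, F i j = - F j i) -> (forall i, F i i = 0) ->
  \sum_i \sum_j F i j = 0.
Proof.
move=> Fa Fd.
rewrite pair_big /= (bigID (fun p : 'I_n * 'I_n => (p.1 < p.2)%N)) /=.
rewrite (bigID (fun p : 'I_n * 'I_n => p.1 == p.2)) /=.
rewrite big1 ?add0r; last by move=> [i j] /andP[_ /eqP /= ->].
rewrite (reindex_inj (h := fun p : 'I_n * 'I_n => (p.2, p.1))) /=; last first.
  by move=> [x1 x2] [y1 y2] /= [-> ->].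
rewrite [X in X + _]big_mkcond [X in _ + X]big_mkcond -big_split big1 // => [[i j]] _ /=.
case: ltngtP => h /=.
- by rewrite ifT ?(Fa j i) ?addNr // neq_ltn h.
- by rewrite addr0.
- by rewrite (val_inj h) Fd addr0.
Qed.
Definition Lop (A : comNzRingType) n (a : 'I_n -> A) (i : 'I_n) (f : mon n -> A)
  : mon n -> A := fun m => pderiv i f m - a i * f m.

Section L.
Variables (A : comNzRingType) (n : nat) (a : 'I_n -> A).

Lemma L_ext i f g m : (forall m, f m = g m) -> Lop a i f m = Lop a i g m.
Proof. by move=> e; rewrite /Lop /pderiv !e. Qed.

Lemma L_opp i f m : Lop a i (fun m => - f m) m = - Lop a i f m.
Proof. by rewrite /Lop /pderiv mulNrn mulrN opprB opprK addrC. Qed.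

Lemma L_sub i f g m : Lop a i (fun m => f m - g m) m = Lop a i f m - Lop a i g m.
Proof.
rewrite /Lop /pderiv mulrnBl mulrBr.
by rewrite !opprD !opprK addrACA.
Qed.

Lemma L_sum i (F : 'I_n -> mon n -> A) m :
  Lop a i (fun m => \sum_j F j m) m = \sum_j Lop a i (F j) m.
Proof. by rewrite /Lop /pderiv -sumrMnl mulr_sumr -sumrB. Qed.

Lemma L_comm i j f m : Lop a i (Lop a j f) m = Lop a j (Lop a i f) m.
Proof.
rewrite /Lop /pderiv !mulrnBl !mulrBr !mulrnAr -!mulrnA incrC.
rewrite !tnth_incr.
have -> : ((tnth m j + (j == i)).+1 * (tnth m i).+1 = (tnth m i + (i == j)).+1 * (tnth m j).+1)%N.
  by case: (eqVneq i j) => [->|ne] //; rewrite !addn0 mulnC.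
by rewrite (mulrCA (a j)) !opprD !opprK addrACA.
Qed.
End L.
Lemma koszul (A : comNzRingType) n (a : 'I_n -> A)
  (reg : forall (i : 'I_n) (x : A), in_ideal a i (x * a i) -> in_ideal a i x) :
  forall k, (k <= n)%N -> forall x : 'I_n -> A,
  \sum_(i < n | (i < k)%N) a i * x i = 0 ->
  exists b : 'I_n -> 'I_n -> A,
    [/\ forall i j, b i j = - b j i, forall i, b i i = 0,
        forall i j : 'I_n, ~~ ((i < k) && (j < k))%N -> b i j = 0 &
        forall i : 'I_n, (i < k)%N -> x i = \sum_(j < n | (j < k)%N) b i j * a j].
Proof.
elim=> [|k IH] kn x Hx.
  by exists (fun _ _ => 0); split=> // *; rewrite oppr0.
have kn' : (k <= n)%N by apply: ltnW.
pose ok := Ordinal kn.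
rewrite (sum_split_k kn) in Hx.
have : in_ideal a ok (x ok * a ok).
  exists (fun i => - x i).
  rewrite mulrC; move/eqP: Hx; rewrite addrC addr_eq0 => /eqP ->.
  by rewrite -sumrN; apply: eq_bigr => i _; rewrite mulNr mulrC.
move=> /reg [c Hc].
pose x' i := x i + c i * a ok.
have Hx' : \sum_(i < n | (i < k)%N) a i * x' i = 0.
  rewrite /x' (eq_bigr (fun i => a i * x i + c i * a i * a ok)); last first.
    by move=> i _; rewrite mulrDr mulrCA mulrA.
  by rewrite big_split /= -mulr_suml -Hc mulrC.
have [b' [b'a b'd b's b'x]] := IH kn' x' Hx'.
exists (fun i j => b' i j - (if (nat_of_ord j == k) && (i < k)%N then c i else 0)
                 + (if (nat_of_ord i == k) && (j < k)%N then c j else 0)).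
split.
- move=> i j; rewrite b'a.
  by rewrite opprD opprB [LHS]addrC addrA.
- by move=> i; rewrite b'd sub0r addNr.
- move=> i j H.
  rewrite b's; last by apply: contra H => /andP[hi hj]; rewrite !ltnS (ltnW hi) (ltnW hj).
  rewrite ifF; last by apply/andP => -[/eqP ej ik]; move/negP: H; apply; rewrite ej ltnSn andbT; exact: ltnW ik.
  rewrite ifF; last by apply/andP => -[/eqP ej ik]; move/negP: H; apply; rewrite ej ltnSn; exact: ltnW ik.
  by rewrite subr0 addr0.
- move=> i; rewrite ltnS leq_eqVlt => /orP[/eqP ei | ik]; rewrite (sum_split_k kn) /=.
  + have -> : i = ok by apply: val_inj.
    rewrite /= eqxx ltnn /= b'd subr0 addr0 mul0r addr0 Hc.
    apply: eq_bigr => j jk.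
    rewrite b's; last by rewrite ltnn.
    by rewrite andbF /= jk subr0 add0r.
  + have /eqP -> : x i == x' i - c i * a ok by rewrite /x' addrK.
    rewrite (b'x i ik) -addrA; congr (_ + _).
      apply: eq_bigr => j jk.
      by rewrite !ifF ?subr0 ?addr0 // ltn_eqF.
    rewrite b's; last by rewrite ltnn andbF.
    by rewrite eqxx ik ltnn andbF /= addr0 add0r mulNr.
Qed.

Lemma sum_full (A : comNzRingType) n (F : 'I_n -> A) :
  \sum_(j < n | (j < n)%N) F j = \sum_j F j.
Proof. by apply: eq_bigl => j; rewrite ltn_ord. Qed.

Lemma L_zero (A : comNzRingType) n (a : 'I_n -> A) i f m :
  (forall m, f m = 0) -> Lop a i f m = 0.
Proof. by move=> z; rewrite /Lop /pderiv !z mul0rn mulr0 subr0. Qed.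

Lemma Dop_L (A : comNzRingType) n (a : 'I_n -> A) h m :
  Dop a h m = \sum_i Lop a i (h i) m.
Proof. by []. Qed.

Section Main.
Variables (A : comNzRingType) (n : nat) (a : 'I_n -> A) (reg : regular_seq a) (d : nat).

Lemma base E (h : 'I_n -> mon n -> A) : (E <= d)%N ->
  (forall i m, h i m != 0 -> (mdeg m <= E)%N) ->
  forall m, mdeg m = d -> in_ideal a n (Dop a h m).
Proof.
move=> Ed hb m md; exists (fun i => - h i m).
rewrite sum_full /Dop; apply: eq_bigr => i _; rewrite /pderiv.
have -> : h i (incr m i) = 0.
  apply/eqP; apply: contraTT (leqnn (mdeg (incr m i))) => /hb H.
  by rewrite -ltnNge; apply: (leq_ltn_trans H); rewrite mdeg_incr md ltnS.
by rewrite mul0rn sub0r mulNr mulrC.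
Qed.

Lemma main E : forall (h : 'I_n -> mon n -> A),
  (forall i m, h i m != 0 -> (mdeg m <= E)%N) ->
  (forall m, (d < mdeg m)%N -> Dop a h m = 0) ->
  forall m, mdeg m = d -> in_ideal a n (Dop a h m).
Proof.
elim: E => [|E IH] h hb hD.
  by apply: (base (E := 0)).
case: (leqP E.+1 d) => [le|lt]; first by apply: (base le).
have hz : forall i m, (E.+1 < mdeg m)%N -> h i m = 0.
  move=> i m H; apply/eqP; apply: contraTT H => /hb; by rewrite -leqNgt.
have Hzero : forall m, mdeg m = E.+1 -> \sum_(i < n | (i < n)%N) a i * h i m = 0.
  move=> m e; have H : (d < mdeg m)%N by rewrite e.
  have := hD m H.
  rewrite /Dop sum_full (eq_bigr (fun i => - (a i * h i m))); last first.
    by move=> i _; rewrite /pderiv hz ?mul0rn ?sub0r // mdeg_incr e.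
  by rewrite sumrN => /eqP; rewrite oppr_eq0 => /eqP.
have K : forall m, exists b : 'I_n -> 'I_n -> A,
    [/\ forall i j, b i j = - b j i, forall i, b i i = 0 &
        mdeg m = E.+1 -> forall i, h i m = \sum_j b i j * a j].
  move=> m; case: (eqVneq (mdeg m) E.+1) => e; last first.
    exists (fun _ _ => 0); split=> //; first by move=> *; rewrite oppr0.
    by move=> e'; rewrite e' eqxx in e.
  have [b [ba bd _ bx]] := koszul reg.1 (leqnn n) (x := fun i => h i m) (Hzero m e).
  by exists b; split=> // _ i; rewrite (bx i (ltn_ord i)) sum_full.
have [Bf BfP] : exists Bf : mon n -> 'I_n -> 'I_n -> A, forall m,
    [/\ forall i j, Bf m i j = - Bf m j i, forall i, Bf m i i = 0 &
        mdeg m = E.+1 -> forall i, h i m = \sum_j Bf m i j * a j].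
  exists (fun m => proj1_sig (constructive_indefinite_description _ (K m))).
  by move=> m; exact: (proj2_sig (constructive_indefinite_description _ (K m))).
pose c i j m := if mdeg m == E.+1 then - Bf m i j else 0.
have cA i j m : c j i m = - c i j m.
  rewrite /c; case: ifP => _; last by rewrite oppr0.
  by case: (BfP m) => ba _ _; rewrite ba.
have cD i m : c i i m = 0.
  rewrite /c; case: ifP => _ //.
  by case: (BfP m) => _ bd _; rewrite bd oppr0.
pose k i m := \sum_j Lop a j (c i j) m.
pose h' i m := h i m - k i m.
have Dk m : Dop a k m = 0.
  rewrite Dop_L (eq_bigr (fun i => \sum_j Lop a i (Lop a j (c i j)) m)); last first.
    by move=> i _; rewrite L_sum.
  apply: antisym_sum => [i j|i].
    rewrite L_comm.
    rewrite (@L_ext _ _ a j (Lop a i (c j i)) (fun m => - Lop a i (c i j) m) m); last first.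
      by move=> m'; rewrite (L_ext _ _ _ (cA i j)) L_opp.
    by rewrite L_opp opprK.
  by apply: L_zero => m'; apply: L_zero => m''; apply: cD.
have Dh' m : Dop a h' m = Dop a h m.
  rewrite !Dop_L (eq_bigr (fun i => Lop a i (h i) m - Lop a i (k i) m)); last first.
    by move=> i _; rewrite L_sub.
  by rewrite sumrB -Dop_L -(Dop_L a k) Dk subr0.
have cz i j m : mdeg m != E.+1 -> c i j m = 0 by rewrite /c => /negbTE ->.
move=> m md; rewrite -Dh'; apply: (IH h' _ _ m md) => [i m' | m' H]; last by rewrite Dh' hD.
apply: contraNT; rewrite -ltnNge => H.
rewrite /h' subr_eq0; apply/eqP.
case: (eqVneq (mdeg m') E.+1) => e.
  case: (BfP m') => _ _ ->; last by [].
  rewrite /k; apply: eq_bigr => j _.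
  rewrite /Lop /pderiv (cz i j (incr m' j)); last by rewrite mdeg_incr e gtn_eqF.
  rewrite mul0rn sub0r /c e eqxx.
  by rewrite mulrN opprK mulrC.
rewrite hz; last by rewrite ltn_neqAle eq_sym e H.
rewrite /k big1 // => j _.
rewrite /Lop /pderiv (cz i j m' e) (cz i j (incr m' j)).
  by rewrite mul0rn mulr0 subr0.
by rewrite mdeg_incr gtn_eqF.
Qed.
End Main.

Theorem lemma2p5 (A : comNzRingType) (n : nat) (a : 'I_n -> A)
  (g : mon n -> A) (d : nat) :
  regular_seq a ->
  fin_supp g ->
  (* g has total degree d *)
  (exists m, g m != 0 /\ mdeg m = d) ->
  (forall m, g m != 0 -> (mdeg m <= d)%N) ->
  (* g lies in the image of D *)
  (exists h : 'I_n -> mon n -> A,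
      (forall i, fin_supp (h i)) /\ (forall m, g m = Dop a h m)) ->
  (* every coefficient of g_d lies in a = A a_1 + ... + A a_n *)
  forall m, mdeg m = d -> in_ideal a n (g m).
Proof.
move=> reg _ _ gd [h [hfin hg]] m md.
have [S HS] : exists S : 'I_n -> seq (mon n), forall i m, h i m != 0 -> m \in S i.
  exists (fun i => proj1_sig (constructive_indefinite_description _ (hfin i))).
  by move=> i; exact: (proj2_sig (constructive_indefinite_description _ (hfin i))).
rewrite hg; apply: (@main _ _ _ reg d (\max_(i < n) \max_(m <- S i) mdeg m) h _ _ m md).
- move=> i m' /HS H.
  apply: (leq_trans _ (leq_bigmax i)).
  exact: (leq_bigmax_seq _ H).
- move=> m' H; rewrite -hg; apply/eqP; apply: contraTT H => /gd.
  by rewrite -leqNgt.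
Qed.
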